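(* Let $L\subseteq Q$ be an extension of Lie algebras with $L$ semiprime and $Q$ an algebra of quotients of $L$. Then $[Q,Q]$ is an algebra of quotients of $[L,L]$.
   Context: Lie algebras over a commutative unital ring $\Phi$. $[L,L]$ is the span of all brackets of elements of $L$. $\mathrm{Ann}_L(X)=\{a\in L:[a,x]=0\ \forall x\in X\}$. $L$ is semiprime if $[I,I]\ne 0$ for every nonzero ideal $I$. For a Lie subalgebra $L\subseteq Q$, $Q$ is an algebra of quotients of $L$ if for every nonzero $q\in Q$ there is an ideal $I$ of $L$ with $\mathrm{Ann}_L(I)=0$ and $0\ne[I,q]\subseteq L$. *)

(* Defs.v *)
From HB Require Import structures.
From mathcomp Require Import all_boot all_algebra.
Set Implicit Arguments. Unset Strict Implicit. Unset Printing Implicit Defensive.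
Import GRing.Theory.
Local Open Scope ring_scope.

Section Lie.
Variables (Phi : comPzRingType) (V : lmodType Phi) (br : V -> V -> V).

Definition is_lie_bracket : Prop :=
  [/\ forall (c : Phi) x y z, br (c *: x + y) z = c *: br x z + br y z,
      forall (c : Phi) x y z, br z (c *: x + y) = c *: br z x + br z y,
      forall x, br x x = 0
    & forall x y z, br x (br y z) + br y (br z x) + br z (br x y) = 0].

Definition submodule (S : V -> Prop) : Prop :=
  [/\ S 0, forall x y, S x -> S y -> S (x + y)
    & forall (c : Phi) x, S x -> S (c *: x)].

Definition lie_subalgebra (S : V -> Prop) : Prop :=
  submodule S /\ forall x y, S x -> S y -> S (br x y).

Definition lie_ideal (S I : V -> Prop) : Prop :=
  [/\ forall x, I x -> S x, submodule I
    & forall x y, S x -> I y -> I (br x y)].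

(* [S,S]: the Phi-span of all brackets of elements of S *)
Definition derived (S : V -> Prop) : V -> Prop :=
  fun x => exists (n : nat) (c : 'I_n -> Phi) (a b : 'I_n -> V),
    (forall i, S (a i) /\ S (b i)) /\
    x = \sum_(i < n) c i *: br (a i) (b i).

Definition ann_zero (S X : V -> Prop) : Prop :=
  forall a, S a -> (forall x, X x -> br a x = 0) -> a = 0.

Definition semiprime (S : V -> Prop) : Prop :=
  forall I, lie_ideal S I -> (exists x, I x /\ x <> 0) ->
    exists x y, I x /\ I y /\ br x y <> 0.

Definition algebra_of_quotients (L Q : V -> Prop) : Prop :=
  [/\ lie_subalgebra Q, lie_subalgebra L, (forall x, L x -> Q x)
    & forall q, Q q -> q <> 0 ->
        exists I, [/\ lie_ideal L I, ann_zero L I,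
                      (exists x, I x /\ br x q <> 0)
                    & forall x, I x -> L (br x q)]].

End Lie.

(* Main.v *)
Require Import Defs.
From HB Require Import structures.
From mathcomp Require Import all_boot all_algebra.
From Stdlib Require Import Classical.
Set Implicit Arguments. Unset Strict Implicit. Unset Printing Implicit Defensive.
Import GRing.Theory.
Local Open Scope ring_scope.

Lemma derived0 (Phi : comPzRingType) (V : lmodType Phi) (br : V -> V -> V) S :
  derived br S 0.
Proof.
exists 0%N, (fun _ => 0), (fun _ => 0), (fun _ => 0); split.
  by case.
by rewrite big_ord0.
Qed.

Lemma derived_cons (Phi : comPzRingType) (V : lmodType Phi) (br : V -> V -> V) S z c0 a0 b0 :
  derived br S z -> S a0 -> S b0 -> derived br S (z + c0 *: br a0 b0).
Proof.
move=> [n [c [a [b [Hab ->]]]]] Ha Hb.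
exists n.+1, (fun i => if unlift ord0 i is Some j then c j else c0),
  (fun i => if unlift ord0 i is Some j then a j else a0),
  (fun i => if unlift ord0 i is Some j then b j else b0); split.
  by move=> i; case: (unlift ord0 i).
rewrite big_ord_recl unlift_none addrC; congr (_ + _).
by apply: eq_bigr => i _; rewrite liftK.
Qed.

Lemma derived_br (Phi : comPzRingType) (V : lmodType Phi) (br : V -> V -> V) S a b :
  S a -> S b -> derived br S (br a b).
Proof.
move=> Ha Hb; have := derived_cons 1 (derived0 br S) Ha Hb.
by rewrite add0r scale1r.
Qed.

Lemma derivedD (Phi : comPzRingType) (V : lmodType Phi) (br : V -> V -> V) S x y :
  derived br S x -> derived br S y -> derived br S (x + y).
Proof.
move=> [n [c [a [b [Hab ->]]]]] Hy.
elim: n c a b Hab => [|n IH] c a b Hab; first by rewrite big_ord0 add0r.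
rewrite big_ord_recr /= -addrA (addrC _ y) addrA.
apply: derived_cons; last by case: (Hab ord_max).
  by apply: IH => i; apply: Hab.
by case: (Hab ord_max).
Qed.

Lemma derivedZ (Phi : comPzRingType) (V : lmodType Phi) (br : V -> V -> V) S (k : Phi) x :
  derived br S x -> derived br S (k *: x).
Proof.
move=> [n [c [a [b [Hab ->]]]]].
exists n, (fun i => k * c i), a, b; split => //.
by rewrite scaler_sumr; apply: eq_bigr => i _; rewrite scalerA.
Qed.

Lemma derived_sub (Phi : comPzRingType) (V : lmodType Phi) (br : V -> V -> V) S :
  submodule (derived br S).
Proof.
split; [exact: derived0 | move=> x y; exact: derivedD | move=> k x; exact: derivedZ].
Qed.

Lemma derived_ind (Phi : comPzRingType) (V : lmodType Phi) (br : V -> V -> V) S P :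
  submodule P -> (forall a b, S a -> S b -> P (br a b)) ->
  forall x, derived br S x -> P x.
Proof.
move=> [P0 PD PZ] Pb x [n [c [a [b [Hab ->]]]]].
elim: n c a b Hab => [|n IH] c a b Hab; first by rewrite big_ord0.
rewrite big_ord_recr /=; apply: PD.
  by apply: IH => i; apply: Hab.
by apply: PZ; case: (Hab ord_max) => ? ?; apply: Pb.
Qed.
Section X. End X.
Lemma brDl (Phi : comPzRingType) (V : lmodType Phi) (br : V -> V -> V) :
  is_lie_bracket br -> forall x y z, br (x + y) z = br x z + br y z.
Proof. by rewrite /is_lie_bracket => -[H1 _ _ _] x y z; have := H1 1 x y z; rewrite !scale1r. Qed.

Lemma brDr (Phi : comPzRingType) (V : lmodType Phi) (br : V -> V -> V) :
  is_lie_bracket br -> forall x y z, br z (x + y) = br z x + br z y.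
Proof. by rewrite /is_lie_bracket => -[_ H1 _ _] x y z; have := H1 1 x y z; rewrite !scale1r. Qed.

Lemma br0l (Phi : comPzRingType) (V : lmodType Phi) (br : V -> V -> V) :
  is_lie_bracket br -> forall z, br 0 z = 0.
Proof.
move=> H z; have h := brDl H 0 0 z; rewrite addr0 in h.
by have := congr1 (fun t => t - br 0 z) h; rewrite subrr addrK.
Qed.

Lemma br0r (Phi : comPzRingType) (V : lmodType Phi) (br : V -> V -> V) :
  is_lie_bracket br -> forall z, br z 0 = 0.
Proof.
move=> H z; have h := brDr H 0 0 z; rewrite addr0 in h.
by have := congr1 (fun t => t - br z 0) h; rewrite subrr addrK.
Qed.

Lemma brZl (Phi : comPzRingType) (V : lmodType Phi) (br : V -> V -> V) :
  is_lie_bracket br -> forall c x z, br (c *: x) z = c *: br x z.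
Proof.
move=> H c x z; have := H; rewrite /is_lie_bracket => -[H1 _ _ _].
by have := H1 c x 0 z; rewrite !addr0 (br0l H) addr0.
Qed.

Lemma brZr (Phi : comPzRingType) (V : lmodType Phi) (br : V -> V -> V) :
  is_lie_bracket br -> forall c x z, br z (c *: x) = c *: br z x.
Proof.
move=> H c x z; have := H; rewrite /is_lie_bracket => -[_ H1 _ _].
by have := H1 c x 0 z; rewrite !addr0 (br0r H) addr0.
Qed.

Lemma brN (Phi : comPzRingType) (V : lmodType Phi) (br : V -> V -> V) :
  is_lie_bracket br -> forall x y, br x y = - br y x.
Proof.
move=> H x y; have := H; rewrite /is_lie_bracket => -[_ _ H3 _].
have := H3 (x + y); rewrite (brDl H) !(brDr H) (H3 x) (H3 y) add0r addr0 => /eqP.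
by rewrite addr_eq0 => /eqP.
Qed.

Lemma brNr (Phi : comPzRingType) (V : lmodType Phi) (br : V -> V -> V) :
  is_lie_bracket br -> forall x y, br x (- y) = - br x y.
Proof. by move=> H x y; rewrite -scaleN1r brZr // scaleN1r. Qed.

Lemma brJ (Phi : comPzRingType) (V : lmodType Phi) (br : V -> V -> V) :
  is_lie_bracket br -> forall x y z,
  br x (br y z) = br (br x y) z + br y (br x z).
Proof.
move=> H x y z; have := H; rewrite /is_lie_bracket => -[_ _ _ H4].
have h := H4 x y z; rewrite (brN H z (br x y)) (brN H z x) (brNr H) in h.
apply/eqP; rewrite -subr_eq0 -h; apply/eqP.
by rewrite opprD -!addrA; congr (_ + _); rewrite addrC.
Qed.

Lemma derived_in (Phi : comPzRingType) (V : lmodType Phi) (br : V -> V -> V) S :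
  lie_subalgebra br S -> forall x, derived br S x -> S x.
Proof. by move=> [HS Hb]; apply: derived_ind. Qed.

Lemma derived_mono (Phi : comPzRingType) (V : lmodType Phi) (br : V -> V -> V) (A B : V -> Prop) :
  (forall x, A x -> B x) -> forall x, derived br A x -> derived br B x.
Proof.
move=> AB; apply: derived_ind; first exact: derived_sub.
by move=> a b Ha Hb; apply: derived_br; apply: AB.
Qed.

Lemma derived_ideal (Phi : comPzRingType) (V : lmodType Phi) (br : V -> V -> V) L I :
  is_lie_bracket br -> lie_subalgebra br L -> lie_ideal br L I ->
  lie_ideal br L (derived br I).
Proof.
move=> H HL [HIL HIs HIb]; split.
- by move=> x /(derived_mono HIL); apply: derived_in.
- exact: derived_sub.
move=> x y Hx; move: y; apply: (@derived_ind _ _ br I (fun y => derived br I (br x y))).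
  split.
  - by rewrite (br0r H); apply: derived0.
  - by move=> u v Hu Hv; rewrite (brDr H); apply: derivedD.
  - by move=> c u Hu; rewrite (brZr H); apply: derivedZ.
move=> a b Ha Hb; rewrite (brJ H); apply: derivedD; apply: derived_br => //; exact: HIb.
Qed.

Lemma ann_derived (Phi : comPzRingType) (V : lmodType Phi) (br : V -> V -> V) L I :
  is_lie_bracket br -> lie_subalgebra br L -> semiprime br L -> lie_ideal br L I ->
  ann_zero br L I ->
  forall a, L a -> (forall x, derived br I x -> br a x = 0) -> a = 0.
Proof.
move=> H HL Hsp HI Hann a La Ha.
have [HIL [HI0 HID HIZ] HIb] := HI.
have [[HL0 HLD HLZ] HLb] := HL.
have [_ _ HdIb] := derived_ideal H HL HI.
pose K k := L k /\ forall x, derived br I x -> br k x = 0.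
have Kid : forall x y, L x -> K y -> K (br x y).
  move=> x y Lx [Ly Ky]; split; first exact: HLb.
  move=> z Hz; have := brJ H x y z.
  by rewrite (Ky z Hz) (br0r H) (Ky _ (HdIb _ _ Lx Hz)) addr0 => <-.
have Ksub : submodule K.
  split.
  - by split=> // x _; rewrite (br0l H).
  - move=> u v [Lu Ku] [Lv Kv]; split; first exact: HLD.
    by move=> x Hx; rewrite (brDl H) Ku // Kv // addr0.
  - move=> c u [Lu Ku]; split; first exact: HLZ.
    by move=> x Hx; rewrite (brZl H) Ku // scaler0.
have [K0 KD KZ] := Ksub.
pose M m := K m /\ I m.
have HM : lie_ideal br L M.
  split.
  - by move=> x [[]].
  - split.
    + by split.
    + by move=> u v [Ku Iu] [Kv Iv]; split; [apply: KD | apply: HID].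
    + by move=> c u [Ku Iu]; split; [apply: KZ | apply: HIZ].
  - by move=> x y Lx [Ky Iy]; split; [apply: Kid | apply: HIb].
have [HML [HM0 HMD HMZ] HMb] := HM.
have NM : forall x, derived br M x -> M x.
  apply: derived_ind; first by split.
  by move=> u v Mu Mv; apply: HMb => //; apply: HML.
have N0 : forall x, derived br M x -> x = 0.
  move=> x Nx; apply: NNPP => nx.
  have [u [v [Nu [Nv Huv]]]] := Hsp _ (derived_ideal H HL HM) (ex_intro _ x (conj Nx nx)).
  apply: Huv; have [[_ Ku] _] := NM _ Nu.
  by apply: Ku; apply: (derived_mono (fun z (Mz : M z) => Mz.2)).
have M0 : forall x, M x -> x = 0.
  move=> x Mx; apply: NNPP => nx.
  have [u [v [Mu [Mv Huv]]]] := Hsp _ HM (ex_intro _ x (conj Mx nx)).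
  by apply: Huv; apply: N0; apply: derived_br.
apply: Hann => // i Ii.
apply: M0; split; last exact: HIb.
rewrite (brN H) -scaleN1r; apply: KZ; apply: Kid; first exact: HIL.
by split.
Qed.

Theorem mainTheorem6 (Phi : comPzRingType) (V : lmodType Phi)
    (br : V -> V -> V) (L Q : V -> Prop) :
  is_lie_bracket br ->
  semiprime br L ->
  algebra_of_quotients br L Q ->
  algebra_of_quotients br (derived br L) (derived br Q).
Proof.
move=> H Hsp [HQs HLs HLQ Hq].
have HLs' := HLs; have [[HL0 HLD HLZ] HLb] := HLs'.
split.
- split; first exact: derived_sub.
  by move=> x y /(derived_in HQs) Qx /(derived_in HQs) Qy; apply: derived_br.
- split; first exact: derived_sub.
  by move=> x y /(derived_in HLs) Lx /(derived_in HLs) Ly; apply: derived_br.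
- exact: derived_mono.
move=> q /(derived_in HQs) Qq nq.
have [I [HI Hann [x0 [Ix0 Hx0]] HIq]] := Hq q Qq nq.
have HdI := derived_ideal H HLs HI.
have [HIL _ HIb] := HI.
have [_ _ HdIb] := HdI.
exists (derived br I); split.
- split.
  + exact: derived_mono.
  + exact: derived_sub.
  + by move=> x y /(derived_in HLs) Lx; apply: HdIb.
- by move=> a /(derived_in HLs) La; apply: (ann_derived H HLs Hsp HI Hann).
- apply: NNPP => Hn; apply: Hx0.
  have Hz : forall x, derived br I x -> br x q = 0.
    by move=> x Hx; apply: NNPP => nx; apply: Hn; exists x.
  apply: (ann_derived H HLs Hsp HI Hann); first exact: HIq.
  move=> j Hj; rewrite (brN H) (brJ H) (Hz j Hj) (br0r H) addr0.
  rewrite Hz ?oppr0 //.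
  rewrite (brN H) -scaleN1r; apply: derivedZ; apply: HdIb => //; exact: HIL.
- apply: derived_ind.
    split.
    + by rewrite (br0l H); apply: derived0.
    + by move=> u v Hu Hv; rewrite (brDl H); apply: derivedD.
    + by move=> c u Hu; rewrite (brZl H); apply: derivedZ.
  move=> a b Ia Ib.
  have -> : br (br a b) q = br a (br b q) + br (br a q) b.
    by rewrite (brJ H a b q) (brN H (br a q) b) addrK.
  by apply: derivedD; apply: derived_br; try apply: HIq; try apply: HIL.
Qed.
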